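(* Let $\lambda>0$ and $\mu\ge0$ be reals and let $(G_n)_{n\ge1}$ be elements of $\mathcal H$ such that the infinite product $\prod_n G_n$ is of type $(\lambda,\mu)$. Then $\prod_{n\ge1}G_n$ converges in $\mathcal H$ to an element $G$ of order at most $\mu$.
   Context: Let $p$ be an odd prime. $\mathcal H$ is the ring of power series in $\mathbb Q_p[[x]]$ converging on the open unit disc of $\mathbb C_p$, with its Fréchet topology given by the norms $\|f\|_\rho=\sup_{|z|_p\le\rho}|f(z)|_p$, $0<\rho<1$; put $\|f\|_1=\sup_{\rho<1}\|f\|_\rho\in[0,\infty]$. Let $\rho_0=p^{-1/(p-1)}$ and, for $0<\rho<1$, let $n_0(\rho)$ be the smallest integer $\ge0$ with $\rho^{p^{n_0(\rho)}}\le\rho_0$. A product $\prod_nG_n$ is of type $(\lambda,\mu)$ if (1) $\|G_n\|_1\le p^{\mu}$ for all $n$, and (2) there is a constant $\nu$ such that for every real $0<\rho<1$ and every $n\ge n_0(\rho)$, $\|G_n-1\|_\rho\le p^{\nu}p^{-\lambda(n-n_0(\rho))}$. The order of $G\in\mathcal H$ is the infimum of the reals $h$ such that $\sup_{m\ge0}p^{-mh}\|G\|_{\rho^{1/p^m}}<\infty$ for some $\rho\in(0,1)$. *)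

(* Defs.v *)
From HB Require Import structures.
From mathcomp Require Import all_boot all_order all_algebra.
From mathcomp Require Import all_classical all_reals all_analysis.
Set Implicit Arguments. Unset Strict Implicit. Unset Printing Implicit Defensive.
Import Order.TTheory GRing.Theory Num.Theory.
Local Open Scope ring_scope.
Local Open Scope classical_set_scope.

(* C_p is modelled abstractly: an algebraically closed field L with an
   absolute value abs : L -> R which is non-archimedean, restricts to the
   p-adic absolute value on the integers (hence on Q), is complete, and in
   which the algebraic numbers (over Q) are dense.  These properties
   characterise C_p up to isometric isomorphism. *)
Record is_Cp (p : nat) (R : realType) (L : closedFieldType) (abs : L -> R)
  : Prop := IsCp {
  abs_ge0 : forall x, 0 <= abs x;
  abs_eq0 : forall x, abs x = 0 <-> x = 0;
  absM : forall x y, abs (x * y) = abs x * abs y;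
  abs_ultra : forall x y, abs (x + y) <= Num.max (abs x) (abs y);
  abs_nat : forall n : nat, (0 < n)%N ->
     abs (n%:R) = ((p%:R : R)^-1) ^+ (logn p n);
  abs_complete : forall u : nat -> L,
     (forall eps : R, 0 < eps -> exists N, forall m n, (N <= m)%N -> (N <= n)%N ->
         abs (u m - u n) < eps) ->
     exists l, forall eps : R, 0 < eps -> exists N, forall n, (N <= n)%N ->
         abs (u n - l) < eps;
  abs_alg_dense : forall (z : L) (eps : R), 0 < eps ->
     exists w : L, (exists q : {poly rat}, q != 0 /\ root (map_poly ratr q) w)
                   /\ abs (z - w) < eps
}.

Definition cvgL (R : realType) (L : closedFieldType) (abs : L -> R)
  (u : nat -> L) (l : L) : Prop :=
  forall eps : R, 0 < eps -> exists N, forall n, (N <= n)%N -> abs (u n - l) < eps.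

(* power series are coefficient sequences f : nat -> L *)
Definition psum (L : closedFieldType) (f : nat -> L) (z : L) (n : nat) : L :=
  \sum_(i < n) f i * z ^+ i.

Definition sums (R : realType) (L : closedFieldType) (abs : L -> R)
  (f : nat -> L) (z s : L) : Prop := cvgL abs (psum f z) s.

Definition in_Qp (R : realType) (L : closedFieldType) (abs : L -> R) (a : L) : Prop :=
  forall eps : R, 0 < eps -> exists q : rat, abs (a - ratr q) < eps.

Definition in_H (R : realType) (L : closedFieldType) (abs : L -> R)
  (f : nat -> L) : Prop :=
  (forall n, in_Qp abs (f n)) /\
  (forall z, abs z < 1 -> exists s, sums abs f z s).

Definition normrho (R : realType) (L : closedFieldType) (abs : L -> R)
  (f : nat -> L) (rho : R) : \bar R :=
  ereal_sup [set x | exists z s, abs z <= rho /\ sums abs f z s /\ x = (abs s)%:E].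

Definition norm1 (R : realType) (L : closedFieldType) (abs : L -> R)
  (f : nat -> L) : \bar R :=
  ereal_sup [set x | exists rho : R, 0 < rho < 1 /\ x = normrho abs f rho].

Definition ps_one (L : closedFieldType) : nat -> L := fun n => if n == 0%N then 1 else 0.
Definition ps_sub (L : closedFieldType) (f g : nat -> L) : nat -> L := fun n => f n - g n.
Definition ps_mul (L : closedFieldType) (f g : nat -> L) : nat -> L :=
  fun n => \sum_(i < n.+1) f i * g (n - i)%N.

Fixpoint pprod (L : closedFieldType) (G : nat -> nat -> L) (N : nat) : nat -> L :=
  match N with
  | 0 => ps_one L
  | N'.+1 => ps_mul (pprod G N') (G N'.+1)
  end.

Definition rho0 (R : realType) (p : nat) : R := (p%:R : R) `^ (- (p.-1%:R)^-1).

Definition is_n0 (R : realType) (p : nat) (rho : R) (k : nat) : Prop :=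
  rho ^+ (p ^ k) <= rho0 R p /\
  (forall j, (j < k)%N -> rho0 R p < rho ^+ (p ^ j)).

Definition type_lm (p : nat) (R : realType) (L : closedFieldType) (abs : L -> R)
  (G : nat -> nat -> L) (lam mu : R) : Prop :=
  (forall n, (1 <= n)%N -> (norm1 abs (G n) <= ((p%:R : R) `^ mu)%:E)%E) /\
  exists nu : R, forall rho : R, 0 < rho < 1 -> forall k, is_n0 p rho k ->
    forall n, (k <= n)%N -> (1 <= n)%N ->
      (normrho abs (ps_sub (G n) (ps_one L)) rho <=
        ((p%:R : R) `^ nu * (p%:R : R) `^ (- (lam * (n - k)%:R)))%:E)%E.

Definition order_set (p : nat) (R : realType) (L : closedFieldType) (abs : L -> R)
  (f : nat -> L) : set R :=
  [set h | exists rho : R, 0 < rho < 1 /\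
     (ereal_sup [set x | exists m : nat, x =
        (((p%:R : R) `^ (- (m%:R * h)))%:E *
          normrho abs f (rho `^ ((p ^ m)%:R)^-1))%E] < +oo)%E].

Definition ps_order (p : nat) (R : realType) (L : closedFieldType) (abs : L -> R)
  (f : nat -> L) : \bar R :=
  ereal_inf [set x | exists h, order_set p abs f h /\ x = h%:E].

(* Main.v *)
Set Warnings "-all".
Require Import Defs.
From HB Require Import structures.
From mathcomp Require Import all_boot all_order all_algebra.
From mathcomp Require Import all_classical all_reals all_analysis.
From mathcomp Require Import ring lra.
Import Order.TTheory GRing.Theory Num.Theory.
Local Open Scope ring_scope.
Set Implicit Arguments. Unset Strict Implicit. Unset Printing Implicit Defensive.


Lemma abs0 p (R : realType) (L : closedFieldType) (abs : L -> R) (hC : is_Cp p abs) :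
  abs 0 = 0.
Proof. by apply/(abs_eq0 hC). Qed.

Lemma abs1 p (R : realType) (L : closedFieldType) (abs : L -> R) (hC : is_Cp p abs) :
  abs 1 = 1.
Proof.
have h := absM hC 1 1. rewrite mulr1 in h.
have h0 : abs 1 != 0 by apply/eqP => /(abs_eq0 hC)/eqP; rewrite oner_eq0.
by apply: (mulfI h0); rewrite -h mulr1.
Qed.

Lemma absN p (R : realType) (L : closedFieldType) (abs : L -> R) (hC : is_Cp p abs) x :
  abs (- x) = abs x.
Proof.
have h : abs (-1) = 1.
  have e := absM hC (-1) (-1). rewrite mulrNN mulr1 (abs1 hC) in e.
  have g := abs_ge0 hC (-1).
  have : (abs (-1) - 1) * (abs (-1) + 1) = 0 by rewrite -subr_sqr expr1n expr2 -e subrr.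
  move/eqP; rewrite mulf_eq0 => /orP [/eqP|]; first by move/eqP; rewrite subr_eq0 => /eqP.
  by rewrite paddr_eq0 // => /andP [_]; rewrite oner_eq0.
by rewrite -mulN1r (absM hC) h mul1r.
Qed.

Lemma absB p (R : realType) (L : closedFieldType) (abs : L -> R) (hC : is_Cp p abs) x y :
  abs (x - y) = abs (y - x).
Proof. by rewrite -(absN hC) opprB. Qed.

Lemma absX p (R : realType) (L : closedFieldType) (abs : L -> R) (hC : is_Cp p abs) x n :
  abs (x ^+ n) = abs x ^+ n.
Proof.
elim: n => [|n IH]; first by rewrite !expr0 (abs1 hC).
by rewrite !exprS (absM hC) IH.
Qed.

Lemma abs_le_add p (R : realType) (L : closedFieldType) (abs : L -> R) (hC : is_Cp p abs) x y B :
  abs x <= B -> abs y <= B -> abs (x + y) <= B.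
Proof. by move=> hx hy; apply: le_trans (abs_ultra hC x y) _; rewrite ge_max hx hy. Qed.

Lemma abs_lt_add p (R : realType) (L : closedFieldType) (abs : L -> R) (hC : is_Cp p abs) x y B :
  abs x < B -> abs y < B -> abs (x + y) < B.
Proof. by move=> hx hy; apply: le_lt_trans (abs_ultra hC x y) _; rewrite gt_max hx hy. Qed.

Lemma abs_sum_le p (R : realType) (L : closedFieldType) (abs : L -> R) (hC : is_Cp p abs)
  (I : Type) (r : seq I) (P : pred I) (F : I -> L) B :
  0 <= B -> (forall i, P i -> abs (F i) <= B) -> abs (\sum_(i <- r | P i) F i) <= B.
Proof.
move=> B0 h; apply: (big_ind (fun x => abs x <= B)) => //; first by rewrite (abs0 hC).
by move=> x y; apply: (abs_le_add hC).
Qed.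

Lemma abs_sum_lt p (R : realType) (L : closedFieldType) (abs : L -> R) (hC : is_Cp p abs)
  (I : Type) (r : seq I) (P : pred I) (F : I -> L) B :
  0 < B -> (forall i, P i -> abs (F i) < B) -> abs (\sum_(i <- r | P i) F i) < B.
Proof.
move=> B0 h; apply: (big_ind (fun x => abs x < B)) => //; first by rewrite (abs0 hC).
by move=> x y; apply: (abs_lt_add hC).
Qed.

Lemma abs_strict p (R : realType) (L : closedFieldType) (abs : L -> R) (hC : is_Cp p abs) x y :
  abs y < abs x -> abs (x + y) = abs x.
Proof.
move=> hyx; apply/eqP; rewrite eq_le; apply/andP; split.
  by apply: le_trans (abs_ultra hC x y) _; rewrite ge_max lexx ltW.
have e : x = (x + y) + (- y) by rewrite addrK.
have := abs_ultra hC (x + y) (- y); rewrite -e (absN hC).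
rewrite le_max => /orP [//|h]; by move: (lt_le_trans hyx h); rewrite ltxx.
Qed.

Lemma absV p (R : realType) (L : closedFieldType) (abs : L -> R) (hC : is_Cp p abs) x :
  abs (x^-1) = (abs x)^-1.
Proof.
have [->|x0] := eqVneq x 0; first by rewrite invr0 (abs0 hC) invr0.
have h := absM hC x x^-1; rewrite mulfV // (abs1 hC) in h.
have ax : abs x != 0 by apply/eqP => /(abs_eq0 hC)/eqP; rewrite (negbTE x0).
by apply: (mulfI ax); rewrite -h mulfV.
Qed.

Lemma cvgL_bound p (R : realType) (L : closedFieldType) (abs : L -> R) (hC : is_Cp p abs)
  (u : nat -> L) l B : cvgL abs u l -> 0 <= B -> (forall n, abs (u n) <= B) -> abs l <= B.
Proof.
move=> hu B0 hb; rewrite leNgt; apply/negP => hl.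
have hpos : 0 < abs l - B by rewrite subr_gt0.
have [N hN] := hu (abs l - B) hpos.
have h1 := hN N (leqnn N).
have e : l = u N + (- (u N - l)) by rewrite opprB addrC subrK.
have := abs_ultra hC (u N) (- (u N - l)); rewrite -e (absN hC) => h.
have : abs l < abs l.
  apply: le_lt_trans h _; rewrite gt_max; apply/andP; split.
    by apply: le_lt_trans (hb N) hl.
  by apply: lt_le_trans h1 _; rewrite lerBlDr lerDl.
by rewrite ltxx.
Qed.

Lemma cvgL_abs_eq p (R : realType) (L : closedFieldType) (abs : L -> R) (hC : is_Cp p abs)
  (u : nat -> L) l c N1 : cvgL abs u l -> 0 < c -> (forall n, (N1 <= n)%N -> abs (u n) = c) ->
  abs l = c.
Proof.
move=> hu c0 hc.
have [N hN] := hu c c0.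
have h1 := hN (maxn N N1) (leq_maxl _ _).
have h2 := hc (maxn N N1) (leq_maxr _ _).
have e : l = u (maxn N N1) + (- (u (maxn N N1) - l)) by rewrite opprB addrC subrK.
by rewrite e (abs_strict hC) // (absN hC) h2.
Qed.

Lemma cvgL_add p (R : realType) (L : closedFieldType) (abs : L -> R) (hC : is_Cp p abs)
  (u v : nat -> L) l m : cvgL abs u l -> cvgL abs v m -> cvgL abs (fun n => u n + v n) (l + m).
Proof.
move=> hu hv eps e0.
have [N1 h1] := hu eps e0. have [N2 h2] := hv eps e0.
exists (maxn N1 N2) => n hn.
have e : u n + v n - (l + m) = (u n - l) + (v n - m) by rewrite opprD addrACA.
rewrite e; apply: (abs_lt_add hC).
  by apply: h1; apply: leq_trans hn; apply: leq_maxl.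
by apply: h2; apply: leq_trans hn; apply: leq_maxr.
Qed.

Lemma cvgL_scale p (R : realType) (L : closedFieldType) (abs : L -> R) (hC : is_Cp p abs)
  (u : nat -> L) l c : cvgL abs u l -> cvgL abs (fun n => c * u n) (c * l).
Proof.
move=> hu eps e0.
have ac0 : 0 < abs c + 1 by apply: ltr_wpDl (abs_ge0 hC c) ltr01.
have [N hN] := hu (eps / (abs c + 1)) (divr_gt0 e0 ac0).
exists N => n hn; rewrite -mulrBr (absM hC).
apply: (@le_lt_trans _ _ ((abs c + 1) * abs (u n - l))).
  by apply: ler_wpM2r; [apply: (abs_ge0 hC)| rewrite lerDl].
by rewrite -ltr_pdivlMl // mulrC hN.
Qed.

Lemma cvgL_cst p (R : realType) (L : closedFieldType) (abs : L -> R) (hC : is_Cp p abs) (c : L) :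
  cvgL abs (fun _ => c) c.
Proof. by move=> eps e0; exists 0%N => n _; rewrite subrr (abs0 hC). Qed.

Lemma cvgL_ext p (R : realType) (L : closedFieldType) (abs : L -> R) (hC : is_Cp p abs)
  (u v : nat -> L) l N0 : (forall n, (N0 <= n)%N -> u n = v n) -> cvgL abs v l -> cvgL abs u l.
Proof.
move=> e hv eps e0; have [N hN] := hv eps e0; exists (maxn N N0) => n hn.
rewrite e; last by apply: leq_trans hn; apply: leq_maxr.
by apply: hN; apply: leq_trans hn; apply: leq_maxl.
Qed.

Lemma cvgL_sum p (R : realType) (L : closedFieldType) (abs : L -> R) (hC : is_Cp p abs)
  q (U : nat -> nat -> L) (l : nat -> L) : (forall j, (j < q)%N -> cvgL abs (U j) (l j)) ->
  cvgL abs (fun n => \sum_(j < q) U j n) (\sum_(j < q) l j).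
Proof.
elim: q => [|q IH] h.
  by move=> eps e0; exists 0%N => n _; rewrite !big_ord0 subrr (abs0 hC).
have h' := cvgL_add hC (IH (fun j hj => h j (ltnW hj))) (h q (ltnSn q)).
by move=> eps e0; have [N hN] := h' eps e0; exists N => n hn; rewrite !big_ord_recr /= hN.
Qed.

Lemma cvgL_sub p (R : realType) (L : closedFieldType) (abs : L -> R) (hC : is_Cp p abs)
  (u v : nat -> L) l m : cvgL abs u l -> cvgL abs v m -> cvgL abs (fun n => u n - v n) (l - m).
Proof.
move=> hu hv; have hv' := cvgL_scale hC (-1) hv.
have := cvgL_add hC hu hv'.
by move=> h eps e0; have [N hN] := h eps e0; exists N => n hn; move: (hN n hn); rewrite !mulN1r.
Qed.

Lemma sums_terms p (R : realType) (L : closedFieldType) (abs : L -> R) (hC : is_Cp p abs)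
  f z s : sums abs f z s -> forall eps, 0 < eps -> exists K, forall k, (K <= k)%N ->
  abs (f k * z ^+ k) < eps.
Proof.
move=> hs eps e0; have [N hN] := hs eps e0; exists N => k hk.
have e : f k * z ^+ k = (psum f z k.+1 - s) - (psum f z k - s).
  by rewrite /psum big_ord_recr /= opprB addrA subrK addrC addKr.
rewrite e; apply: (abs_lt_add hC); first by apply: hN; apply: leqW.
by rewrite (absN hC); apply: hN.
Qed.

Lemma psum_diff (L : closedFieldType) (f : nat -> L) z n m : (n <= m)%N ->
  psum f z m - psum f z n = \sum_(n <= i < m) f i * z ^+ i.
Proof.
move=> hnm; rewrite /psum -!(big_mkord xpredT (fun i => f i * z ^+ i)).
by rewrite (big_cat_nat (leq0n n) hnm) /= [X in X - _]addrC addrK.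
Qed.

Lemma sums_of_terms p (R : realType) (L : closedFieldType) (abs : L -> R) (hC : is_Cp p abs)
  f z : (forall eps, 0 < eps -> exists K, forall k, (K <= k)%N -> abs (f k * z ^+ k) < eps) ->
  exists s, sums abs f z s.
Proof.
move=> ht; apply: (abs_complete hC) => eps e0.
have [K hK] := ht eps e0; exists K => m n hm hn.
wlog hnm : m n hm hn / (n <= m)%N.
  move=> H; case: (leqP n m) => h; first by apply: H.
  by rewrite (absB hC); apply: H => //; apply: ltnW.
rewrite psum_diff // big_nat_cond; apply: (abs_sum_lt hC) => // i /andP [/andP [hi _] _].
by apply: hK; apply: leq_trans hi.
Qed.

Definition gle (R : realType) (L : closedFieldType) (abs : L -> R) (f : nat -> L) (r B : R) :=
  forall i, abs (f i) * r ^+ i <= B.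

Lemma gle_eval p (R : realType) (L : closedFieldType) (abs : L -> R) (hC : is_Cp p abs)
  f r B z s : 0 <= B -> gle abs f r B -> abs z <= r -> sums abs f z s -> abs s <= B.
Proof.
move=> B0 hg hz hs; apply: (cvgL_bound hC hs B0) => n.
apply: (abs_sum_le hC) => // i _; rewrite (absM hC) (absX hC).
apply: le_trans (hg i); apply: ler_wpM2l; first exact: (abs_ge0 hC).
by apply: lerXn2r => //; rewrite nnegrE ?(abs_ge0 hC) //; apply: le_trans hz; apply: (abs_ge0 hC).
Qed.

Lemma normrho_le p (R : realType) (L : closedFieldType) (abs : L -> R) (hC : is_Cp p abs)
  f r rho B : 0 <= B -> gle abs f r B -> rho <= r -> (normrho abs f rho <= B%:E)%E.
Proof.
move=> B0 hg hr; apply: ge_ereal_sup => x [z [s [hz [hs ->]]]].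
by rewrite lee_fin; apply: (gle_eval hC B0 hg _ hs); apply: le_trans hr.
Qed.

Lemma normrho_ub (R : realType) (L : closedFieldType) (abs : L -> R)
  f rho z s : abs z <= rho -> sums abs f z s -> ((abs s)%:E <= normrho abs f rho)%E.
Proof. by move=> hz hs; apply: ereal_sup_ubound; exists z, s. Qed.

Lemma gle_mono (R : realType) (L : closedFieldType) (abs : L -> R) f r A B :
  A <= B -> gle abs f r A -> gle abs f r B.
Proof. by move=> hAB h i; apply: le_trans (h i) hAB. Qed.

Lemma gle_sub p (R : realType) (L : closedFieldType) (abs : L -> R) (hC : is_Cp p abs)
  f g r A B : 0 <= r -> gle abs f r A -> gle abs g r B -> gle abs (ps_sub f g) r (Num.max A B).
Proof.
move=> r0 hf hg i; rewrite /ps_sub.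
apply: le_trans (ler_wpM2r (exprn_ge0 i r0) (abs_ultra hC _ _)) _.
rewrite (absN hC) maxr_pMl ?exprn_ge0 //.
by rewrite ge_max !le_max hf hg orbT.
Qed.

Lemma gle_add p (R : realType) (L : closedFieldType) (abs : L -> R) (hC : is_Cp p abs)
  f g r A B : 0 <= r -> gle abs f r A -> gle abs g r B ->
  gle abs (fun n => f n + g n) r (Num.max A B).
Proof.
move=> r0 hf hg i.
apply: le_trans (ler_wpM2r (exprn_ge0 i r0) (abs_ultra hC _ _)) _.
rewrite maxr_pMl ?exprn_ge0 //.
by rewrite ge_max !le_max hf hg orbT.
Qed.

Lemma gle_one p (R : realType) (L : closedFieldType) (abs : L -> R) (hC : is_Cp p abs) r :
  gle abs (ps_one L) r 1.
Proof.
move=> [|i]; first by rewrite /ps_one /= (abs1 hC) expr0 mulr1.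
by rewrite /ps_one /= (abs0 hC) mul0r ler01.
Qed.

Lemma gle_mul p (R : realType) (L : closedFieldType) (abs : L -> R) (hC : is_Cp p abs)
  f g r A B : 0 <= r -> 0 <= A -> 0 <= B -> gle abs f r A -> gle abs g r B ->
  gle abs (ps_mul f g) r (A * B).
Proof.
move=> r0 A0 B0 hf hg n; rewrite /ps_mul.
have AB0 : 0 <= A * B by apply: mulr_ge0.
have rn0 : 0 <= r ^+ n by apply: exprn_ge0.
have [rz|rnz] := eqVneq (r ^+ n) 0; first by rewrite rz mulr0.
have rnp : 0 < r ^+ n by rewrite lt_def rnz rn0.
rewrite -ler_pdivlMr //; apply: (abs_sum_le hC); first by apply: divr_ge0.
move=> i _; rewrite ler_pdivlMr // (absM hC).
have hi : (i <= n)%N by rewrite -ltnS.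
have e : r ^+ n = r ^+ i * r ^+ (n - i) by rewrite -exprD subnKC.
rewrite e mulrACA.
apply: ler_pM => //; try apply: mulr_ge0; try apply: (abs_ge0 hC); try apply: exprn_ge0 => //.
Qed.

Lemma root_exists (L : closedFieldType) (c : L) n : (0 < n)%N -> exists x : L, x ^+ n = c.
Proof.
case: n => // n _.
have [x hx] := @solve_monicpoly L n.+1 (fun i => if i == 0%N then c else 0) (ltn0Sn n).
exists x; rewrite hx.
rewrite big_ord_recl /= expr0 mulr1.
by rewrite big1 ?addr0 // => i _; rewrite mul0r.
Qed.

Lemma abs_prime_other p (R : realType) (L : closedFieldType) (abs : L -> R) (hC : is_Cp p abs)
  q : prime p -> prime q -> q != p -> abs (q%:R) = 1.
Proof.
move=> pp pq qp; rewrite (abs_nat hC) ?prime_gt0 //.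
suff -> : logn p q = 0%N by rewrite expr0.
apply/eqP; rewrite -leqn0 leqNgt logn_gt0 mem_primes pp prime_gt0 //=.
by rewrite dvdn_prime2 // eq_sym.
Qed.

Lemma natr_neq0 p (R : realType) (L : closedFieldType) (abs : L -> R) (hC : is_Cp p abs)
  q : prime p -> (0 < q)%N -> (q%:R : L) != 0.
Proof.
move=> pp qpos; apply/eqP => /(congr1 abs); rewrite (abs_nat hC qpos) (abs0 hC).
apply/eqP; apply: expf_neq0; apply: invr_neq0.
by rewrite pnatr_eq0 -lt0n prime_gt0.
Qed.

Lemma prim_root_exists p (R : realType) (L : closedFieldType) (abs : L -> R) (hC : is_Cp p abs)
  q : prime p -> prime q -> exists z : L, q.-primitive_root z.
Proof.
move=> pp pq; have q1 : (0 < q.-1)%N by rewrite -ltnS prednK ?prime_gt0 // prime_gt1.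
have [z hz] := @solve_monicpoly L q.-1 (fun _ => -1) q1.
have hsum : \sum_(i < q) z ^+ i = 0.
  rewrite -(prednK (prime_gt0 pq)) big_ord_recr /= hz -big_split /=.
  by rewrite big1 // => i _; rewrite mulN1r addrN.
have hq : z ^+ q = 1 by apply/eqP; rewrite -subr_eq0 subrX1 hsum mulr0.
have [m hm hmq] := prim_order_exists (prime_gt0 pq) hq.
have qpos := prime_gt0 pq.
case/primeP: pq => _ /(_ m hmq) /orP [/eqP m1|/eqP mq]; last by exists z; rewrite -mq.
exfalso; move: hm; rewrite m1 => hm; have z1 := prim_expr_order hm; rewrite expr1 in z1.
move: hsum; rewrite z1; under eq_bigr do rewrite expr1n.
rewrite sumr_const card_ord => /eqP; apply/negP.
exact: natr_neq0 hC q pp qpos.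
Qed.

Lemma abs_zr p (R : realType) (L : closedFieldType) (abs : L -> R) (hC : is_Cp p abs) (z : L) q :
  (0 < q)%N -> z ^+ q = 1 -> abs z = 1.
Proof.
move=> q0 zq; have : abs z ^+ q = 1 by rewrite -(absX hC) zq (abs1 hC).
by move/eqP; rewrite pexpr_eq1 ?(abs_ge0 hC) // => /eqP.
Qed.

Lemma cauchy_est p (R : realType) (L : closedFieldType) (abs : L -> R) (hC : is_Cp p abs)
  (pp : prime p) f z0 M :
  (forall z, abs z <= abs z0 -> exists s, sums abs f z s) ->
  (forall z s, abs z <= abs z0 -> sums abs f z s -> abs s <= M) ->
  gle abs f (abs z0) M.
Proof.
move=> hex hb i; rewrite leNgt; apply/negP => hlt.
set r := abs z0.
have M0 : 0 <= M.
  have h0 : abs (0:L) <= r by rewrite (abs0 hC) (abs_ge0 hC).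
  have [s hs] := hex 0 h0; exact: le_trans (abs_ge0 hC s) (hb _ _ h0 hs).
set t := abs (f i) * r ^+ i.
have t0 : 0 < t := le_lt_trans M0 hlt.
have [s0 hs0] := hex z0 (lexx _).
have [K hK] := sums_terms hC hs0 t0.
have [q hq pq] := prime_above (maxn (maxn K i) p).
have qK : (K < q)%N by apply: leq_ltn_trans hq; rewrite !leq_max leqnn.
have iq : (i < q)%N by apply: leq_ltn_trans hq; rewrite !leq_max leqnn orbT.
have qp : q != p by apply/eqP => e; move: hq; rewrite e !gtn_max ltnn !andbF.
have q0 := prime_gt0 pq.
have [z hz] := prim_root_exists hC pp pq.
have zq := prim_expr_order hz.
have zn0 : z != 0 by apply/eqP => e; move: zq; rewrite e expr0n eqn0Ngt q0 /= => /eqP; rewrite eq_sym oner_eq0.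
have az : abs z = 1 := abs_zr hC q0 zq.
set u := z^-1 ^+ i.
have au : abs u = 1 by rewrite /u (absX hC) (absV hC) az invr1 expr1n.
have uzi : u * z ^+ i = 1 by rewrite /u -exprMn mulVf // expr1n.
have hsj : forall j, exists s, sums abs f (z ^+ j * z0) s.
  by move=> j; apply: hex; rewrite (absM hC) (absX hC) az expr1n mul1r.
have [sf hsf] := choice hsj.
set S := fun n => \sum_(j < q) u ^+ j * psum f (z ^+ j * z0) n.
set C := fun k : nat => \sum_(j < q) (u * z ^+ k) ^+ j.
have eS : forall n, S n = \sum_(k < n) f k * z0 ^+ k * C k.
  move=> n; rewrite /S /C /psum.
  under eq_bigr do rewrite mulr_sumr.
  rewrite exchange_big /=; apply: eq_bigr => k _.
  rewrite mulr_sumr; apply: eq_bigr => j _.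
  rewrite !exprMn -!exprM mulnC.
  by rewrite [(k * j)%N]mulnC; ring.
have Ci : C i = q%:R.
  rewrite /C uzi; under eq_bigr do rewrite expr1n.
  by rewrite sumr_const card_ord.
have Ck0 : forall k, (k < q)%N -> k != i -> C k = 0.
  move=> k kq ki; set w := u * z ^+ k.
  have wq : w ^+ q = 1.
    rewrite /w exprMn /u exprAC exprVn zq invr1 expr1n mul1r.
    by rewrite exprAC zq expr1n.
  have w1 : w != 1.
    apply/eqP => w1.
    have e2 : z ^+ k = z ^+ i * w by rewrite /w mulrA (mulrC (z ^+ i)) uzi mul1r.
    have : z ^+ i = z ^+ k by rewrite e2 w1 mulr1.
    move/eqP; rewrite (eq_prim_root_expr hz) !modn_small // => /eqP e.
    by move: ki; rewrite e eqxx.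
  have : (w - 1) * C k = 0 by rewrite /C -/w -subrX1 wq subrr.
  by move/eqP; rewrite mulf_eq0 subr_eq0 (negbTE w1) /= => /eqP.
have Cle : forall k, abs (C k) <= 1.
  move=> k; apply: (abs_sum_le hC) => // j _.
  by rewrite (absX hC) (absM hC) au (absX hC) az !expr1n mul1r.
have hSabs : forall n, (i.+1 <= n)%N -> abs (S n) = t.
  move=> n hin; rewrite eS (bigD1 (Ordinal hin)) //=.
  have hTi : abs (f i * z0 ^+ i * C i) = t.
    by rewrite Ci !(absM hC) (absX hC) (abs_prime_other hC pp pq qp) mulr1.
  rewrite (abs_strict hC) hTi //.
  apply: (abs_sum_lt hC _ t0) => k hk.
  have hk' : (k : nat) != i by apply: contra hk => /eqP e; apply/eqP; apply: val_inj.
  case: (ltnP k q) => hkq.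
    by rewrite Ck0 // mulr0 (abs0 hC).
  rewrite (absM hC); apply: (le_lt_trans (ler_wpM2l (abs_ge0 hC (f k * z0 ^+ k)) (Cle k))).
  rewrite mulr1; apply: hK; apply: leq_trans hkq; exact: ltnW.
have hcv : cvgL abs S (\sum_(j < q) u ^+ j * sf j).
  rewrite /S; apply: (cvgL_sum hC (U := fun j n => u ^+ j * psum f (z ^+ j * z0) n) (l := fun j => u ^+ j * sf j)).
  by move=> j _; apply: (cvgL_scale hC); apply: hsf.
have e1 := cvgL_abs_eq hC hcv t0 hSabs.
have : abs (\sum_(j < q) u ^+ j * sf j) <= M.
  apply: (abs_sum_le hC _ M0) => j _; rewrite (absM hC) (absX hC) au expr1n mul1r.
  by apply: (hb _ _ _ (hsf j)); rewrite (absM hC) (absX hC) az expr1n mul1r.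
by rewrite e1 leNgt hlt.
Qed.
Lemma pow_small (R : realType) (x eps : R) : 0 <= x -> x < 1 -> 0 < eps ->
  exists n, forall m, (n <= m)%N -> x ^+ m < eps.
Proof.
move=> x0 x1 e0.
have hx : `|x| < 1 by rewrite ger0_norm.
have := cvg_expr hx. move/cvgrPdist_lt => /(_ eps e0).
move=> [N _ hN]. exists N => m hm.
have := hN m hm. rewrite /= sub0r normrN ger0_norm //. exact: exprn_ge0.
Qed.

Lemma sums_sub p (R : realType) (L : closedFieldType) (abs : L -> R) (hC : is_Cp p abs)
  f g z s t : sums abs f z s -> sums abs g z t -> sums abs (ps_sub f g) z (s - t).
Proof.
move=> hf hg; have := cvgL_sub hC hf hg.
apply: (cvgL_ext hC (N0 := 0%N)) => n _.
by rewrite /psum /ps_sub -sumrB; apply: eq_bigr => i _; rewrite mulrBl.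
Qed.

Lemma sums_one p (R : realType) (L : closedFieldType) (abs : L -> R) (hC : is_Cp p abs) z :
  sums abs (ps_one L) z 1.
Proof.
apply: (cvgL_ext hC (N0 := 1%N) (v := fun _ => 1)); last exact: cvgL_cst hC 1.
case=> // n _; rewrite /psum big_ord_recl /= expr0 mulr1 big1 ?addr0 // => i _.
by rewrite /ps_one /= mul0r.
Qed.

Lemma normrho_le_norm1 (R : realType) (L : closedFieldType) (abs : L -> R) f rho :
  0 < rho < 1 -> (normrho abs f rho <= norm1 abs f)%E.
Proof. by move=> h; apply: ereal_sup_ubound; exists rho. Qed.

Lemma gle_from_normrho p (R : realType) (L : closedFieldType) (abs : L -> R) (hC : is_Cp p abs)
  (pp : prime p) f (w : L) M : abs w < 1 ->
  (forall z, abs z < 1 -> exists s, sums abs f z s) ->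
  (normrho abs f (abs w) <= M%:E)%E -> gle abs f (abs w) M.
Proof.
move=> w1 hex hM; apply: (cauchy_est hC pp).
  by move=> z hz; apply: hex; apply: le_lt_trans hz w1.
move=> z s hz hs; rewrite -lee_fin; apply: le_trans hM.
exact: normrho_ub hz hs.
Qed.

Lemma abs_p p (R : realType) (L : closedFieldType) (abs : L -> R) (hC : is_Cp p abs) :
  prime p -> abs (p%:R) = (p%:R)^-1.
Proof. by move=> pp; rewrite (abs_nat hC) ?prime_gt0 // logn_prime // eqxx expr1. Qed.

Lemma radius_exists p (R : realType) (L : closedFieldType) (abs : L -> R) (hC : is_Cp p abs)
  (pp : prime p) (x : R) : 0 <= x -> x < 1 -> exists w : L, 0 < abs w /\ x < abs w /\ abs w < 1.
Proof.
move=> x0 x1.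
have P1 : (1 : R) < p%:R by rewrite ltr1n prime_gt1.
have Pi0 : (0 : R) < (p%:R)^-1 by rewrite invr_gt0; apply: lt_trans P1.
have Pi1 : (p%:R : R)^-1 < 1 by rewrite invf_lt1 // (lt_trans ltr01 P1).
have [n hn] := pow_small x0 x1 Pi0.
have [w hw] := root_exists (p%:R : L) (ltn0Sn n).
have hwn : abs w ^+ n.+1 = (p%:R)^-1 by rewrite -(absX hC) hw (abs_p hC pp).
have w0 : 0 < abs w.
  rewrite lt_def (abs_ge0 hC) andbT; apply/eqP => e; move: hwn; rewrite e exprS mul0r => h.
  by move: Pi0; rewrite -h ltxx.
exists w; split => //; split.
  rewrite ltNge; apply/negP => h.
  have : abs w ^+ n.+1 <= x ^+ n.+1 by apply: lerXn2r; rewrite ?nnegrE ?(abs_ge0 hC).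
  by rewrite hwn leNgt (hn n.+1 (leqnSn n)).
rewrite ltNge; apply/negP => h.
have : 1 <= abs w ^+ n.+1 by apply: exprn_ege1.
by rewrite hwn leNgt Pi1.
Qed.


Lemma is_n0_exists (R : realType) p (rho : R) : prime p -> 0 < rho < 1 -> exists k, is_n0 p rho k.
Proof.
move=> pp /andP [r0 r1].
have h0 : 0 < rho0 R p by apply: powR_gt0; rewrite ltr0n prime_gt0.
have [n hn] := pow_small (ltW r0) r1 h0.
have hex : exists k, rho ^+ (p ^ k) <= rho0 R p.
  exists n; apply: ltW; apply: hn; apply: ltnW; apply: ltn_expl; exact: prime_gt1.
case: (ex_minnP hex) => k hk hmin; exists k; split => // j hj.
by rewrite ltNge; apply/negP => /hmin; rewrite leqNgt hj.
Qed.

Lemma gle_ext (R : realType) (L : closedFieldType) (abs : L -> R) f g r B :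
  (forall i, f i = g i) -> gle abs f r B -> gle abs g r B.
Proof. by move=> e h i; rewrite -e. Qed.

Lemma ps_mul_sub_one (L : closedFieldType) (f g : nat -> L) i :
  ps_sub (ps_mul f g) f i = ps_mul f (ps_sub g (ps_one L)) i.
Proof.
rewrite /ps_sub /ps_mul.
under [in RHS]eq_bigr do rewrite mulrBr.
rewrite sumrB; congr (_ - _).
rewrite big_ord_recr /= subnn /ps_one /= mulr1 big1 ?add0r // => j _.
by rewrite subn_eq0 leqNgt ltn_ord /= mulr0.
Qed.

Lemma Ppow_nat (R : realType) (P lam : R) (m : nat) : 0 <= P ->
  P `^ (- (lam * m%:R)) = (P `^ (- lam)) ^+ m.
Proof. by move=> P0; rewrite -mulNr powRrM powR_mulrn // powR_ge0. Qed.

Lemma radius_main p (R : realType) (L : closedFieldType) (abs : L -> R) (hC : is_Cp p abs)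
  (pp : prime p) (lam mu nu : R) (lam0 : 0 < lam) (mu0 : 0 <= mu) (G : nat -> nat -> L)
  (GH : forall n, (1 <= n)%N -> in_H abs (G n))
  (hG1 : forall n, (1 <= n)%N -> (norm1 abs (G n) <= ((p%:R : R) `^ mu)%:E)%E)
  (hG2 : forall rho : R, 0 < rho < 1 -> forall k, is_n0 p rho k ->
    forall n, (k <= n)%N -> (1 <= n)%N ->
      (normrho abs (ps_sub (G n) (ps_one L)) rho <=
        ((p%:R : R) `^ nu * (p%:R : R) `^ (- (lam * (n - k)%:R)))%:E)%E)
  (c : nat) (hc : nu <= lam * c%:R) (w : L) (k : nat) :
  0 < abs w -> abs w < 1 -> is_n0 p (abs w) k ->
  (forall N, gle abs (pprod G N) (abs w) (((p%:R:R) `^ mu) ^+ (k + c))) /\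
  (forall N d, (k <= N)%N -> gle abs (ps_sub (pprod G (N + d)) (pprod G N)) (abs w)
     (((p%:R:R) `^ mu) ^+ (k + c) * (p%:R:R) `^ nu * ((p%:R:R) `^ (- lam)) ^+ (N - k))).
Proof.
move=> w0 w1 hk.
set P := (p%:R : R). set r := abs w. set A := P `^ mu. set a := P `^ (- lam).
have P1 : 1 <= P by rewrite /P ler1n prime_gt0.
have P0 : 0 <= P by apply: le_trans P1; exact: ler01.
have A1 : 1 <= A by rewrite /A -(powRr0 P); apply: ler_powR.
have A0 : 0 <= A by apply: le_trans A1; exact: ler01.
have a0 : 0 <= a by apply: powR_ge0.
have a1 : a <= 1 by rewrite /a -(powRr0 P); apply: ler_powR => //; rewrite oppr_le0 ltW.
have r0 : 0 <= r by apply: ltW.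
have rr : 0 < r < 1 by rewrite w0 w1.
have hGn : forall n, (1 <= n)%N -> gle abs (G n) r A.
  move=> n n1; apply: (gle_from_normrho hC pp w1); first by case: (GH n n1).
  apply: le_trans (hG1 n n1); exact: normrho_le_norm1.
have hGs : forall n, (k <= n)%N -> (1 <= n)%N ->
    gle abs (ps_sub (G n) (ps_one L)) r (P `^ nu * a ^+ (n - k)).
  move=> n kn n1; apply: (gle_from_normrho hC pp w1).
    move=> z hz; have [s hs] := (GH n n1).2 z hz.
    by exists (s - 1); apply: (sums_sub hC hs (sums_one hC z)).
  by rewrite /a -Ppow_nat //; apply: hG2.
have hG1' : forall n, (k + c <= n)%N -> (1 <= n)%N -> gle abs (G n) r 1.
  move=> n hn n1.
  have hb : P `^ nu * a ^+ (n - k) <= 1.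
    rewrite /a -Ppow_nat // -powRD; last by apply/implyP => _; rewrite /P pnatr_eq0 -lt0n prime_gt0.
    rewrite -[X in _ <= X](powRr0 P); apply: ler_powR => //; rewrite subr_le0.
    apply: le_trans hc _; apply: ler_wpM2l; first exact: ltW.
    by rewrite ler_nat leq_subRL ?(leq_trans (leq_addr c k) hn) // addnC.
  apply: (gle_mono (A := Num.max (P `^ nu * a ^+ (n - k)) 1)); first by rewrite ge_max hb lexx.
  apply: (gle_ext (f := fun i => ps_sub (G n) (ps_one L) i + ps_one L i)).
    by move=> i; rewrite /ps_sub subrK.
  apply: (gle_add hC r0); last exact: gle_one hC r.
  by apply: hGs => //; apply: leq_trans hn; apply: leq_addr.
have hprod : forall N, gle abs (pprod G N) r (A ^+ minn N (k + c)).
  elim=> [|N IH]; first by rewrite min0n expr0; apply: gle_one hC r.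
  rewrite /=; case: (leqP N.+1 (k + c)) => hN.
    rewrite (minn_idPl (ltnW hN)) in IH; rewrite exprSr.
    by apply: (gle_mul hC r0) => //; [apply: exprn_ge0 | apply: hGn].
  have hN' : (k + c <= N)%N by rewrite -ltnS.
  rewrite (minn_idPr hN') in IH; rewrite -[X in gle _ _ _ X]mulr1.
  apply: (gle_mul hC r0) => //; first exact: exprn_ge0.
  by apply: hG1' => //; apply: ltnW.
have hB : forall N, gle abs (pprod G N) r (A ^+ (k + c)).
  move=> N; apply: gle_mono (hprod N); apply: ler_weXn2l => //; exact: geq_minr.
split => // N d kN.
set E := A ^+ (k + c) * P `^ nu.
have E0 : 0 <= E by apply: mulr_ge0; [apply: exprn_ge0|apply: powR_ge0].
have hstep : forall M, (k <= M)%N -> gle abs (ps_sub (pprod G M.+1) (pprod G M)) r (E * a ^+ (M - k)).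
  move=> M kM.
  apply: (gle_ext (f := ps_mul (pprod G M) (ps_sub (G M.+1) (ps_one L)))).
    by move=> i; rewrite -ps_mul_sub_one.
  apply: (gle_mono (A := A ^+ (k + c) * (P `^ nu * a ^+ (M.+1 - k)))).
    rewrite /E -mulrA; apply: ler_wpM2l; first exact: exprn_ge0.
    apply: ler_wpM2l; first exact: powR_ge0.
    by apply: ler_wiXn2l => //; rewrite subSn.
  apply: (gle_mul hC r0) => //; first exact: exprn_ge0.
    by apply: mulr_ge0; [apply: powR_ge0|apply: exprn_ge0].
  by apply: hGs => //; apply: leqW.
elim: d => [|d IH].
  by move=> i; rewrite addn0 /ps_sub subrr (abs0 hC) mul0r; apply: mulr_ge0 => //; apply: exprn_ge0.
apply: (gle_ext (f := fun i => ps_sub (pprod G (N + d).+1) (pprod G (N + d)) i + ps_sub (pprod G (N + d)) (pprod G N) i)).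
  by move=> i; rewrite /ps_sub addnS subrKA.
apply: (gle_mono (A := Num.max (E * a ^+ (N + d - k)) (E * a ^+ (N - k)))).
  rewrite ge_max lexx andbT; apply: ler_wpM2l => //; apply: ler_wiXn2l => //.
  by apply: leq_sub2r; apply: leq_addr.
apply: (gle_add hC r0) => //; apply: hstep; apply: leq_trans kN _; exact: leq_addr.
Qed.
Lemma ratr_morph (L : closedFieldType) (hch : forall n, (0 < n)%N -> (n%:R : L) != 0) :
  (forall x y : rat, ratr (x + y) = ratr x + ratr y :> L) /\
  (forall x y : rat, ratr (x * y) = ratr x * ratr y :> L) /\
  (forall x : rat, ratr (- x) = - ratr x :> L).
Proof.
have injZtoQ: @injective rat int intr by apply: intr_inj.
have nz_den x: (denq x)%:~R != 0 :> L.
  have := denq_gt0 x; case: (denq x) => [n|n] //= hn.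
  by apply: (hch n); rewrite -(ltz_nat 0).
have hB : forall x y : rat, ratr (x - y) = ratr x - ratr y :> L.
  move=> x y.
  apply: (canLR (mulfK (nz_den _))); apply: (mulIf (nz_den x)).
  rewrite mulrAC mulrBl divfK ?nz_den // mulrAC -!rmorphM.
  apply: (mulIf (nz_den y)); rewrite mulrAC mulrBl divfK ?nz_den //.
  rewrite -!(rmorphM, rmorphB); congr _%:~R; apply: injZtoQ.
  rewrite !(rmorphM, rmorphB) /= [_ - _]lock /= -lock !numqE.
  by rewrite (mulrAC y) -!mulrBl -mulrA mulrAC !mulrA.
have h0 : ratr 0 = 0 :> L by have := ratr_int L 0.
have hN : forall x : rat, ratr (- x) = - ratr x :> L.
  by move=> x; have := hB 0 x; rewrite h0 !sub0r.
split; first by move=> x y; have := hB x (- y); rewrite opprK hN opprK.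
split => // x y.
rewrite /ratr mulrC mulrAC; apply: canLR (mulKf (nz_den _)) _; rewrite !mulrA.
do 2!apply: canRL (mulfK (nz_den _)) _; rewrite -!rmorphM; congr _%:~R.
apply: injZtoQ; rewrite !rmorphM [x * y]lock /= !numqE -lock.
by rewrite -!mulrA mulrA mulrCA -!mulrA (mulrCA y).
Qed.

Lemma Qp_rat p (R : realType) (L : closedFieldType) (abs : L -> R) (hC : is_Cp p abs) (q : rat) :
  in_Qp abs (ratr q : L).
Proof. by move=> eps e0; exists q; rewrite subrr (abs0 hC). Qed.

Lemma Qp_add p (R : realType) (L : closedFieldType) (abs : L -> R) (hC : is_Cp p abs)
  (pp : prime p) a b : in_Qp abs a -> in_Qp abs b -> in_Qp abs (a + b).
Proof.
have [hD _] := ratr_morph (fun n hn => natr_neq0 hC pp hn).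
move=> ha hb eps e0; have [q1 h1] := ha eps e0; have [q2 h2] := hb eps e0.
exists (q1 + q2); rewrite hD opprD addrACA; exact: (abs_lt_add hC h1 h2).
Qed.

Lemma Qp_mul p (R : realType) (L : closedFieldType) (abs : L -> R) (hC : is_Cp p abs)
  (pp : prime p) a b : in_Qp abs a -> in_Qp abs b -> in_Qp abs (a * b).
Proof.
have [_ [hM _]] := ratr_morph (fun n hn => natr_neq0 hC pp hn).
move=> ha hb eps e0.
have a1 : 0 < abs a + 1 by apply: ltr_wpDl (abs_ge0 hC a) ltr01.
have b1 : 0 < abs b + 1 by apply: ltr_wpDl (abs_ge0 hC b) ltr01.
have e2 : 0 < Num.min 1 (eps / (abs a + 1)) by rewrite lt_min ltr01 divr_gt0.
have e1 : 0 < eps / (abs b + 1) by rewrite divr_gt0.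
have [q2 h2] := hb _ e2; have [q1 h1] := ha _ e1.
exists (q1 * q2); rewrite hM.
have e : a * b - ratr q1 * ratr q2 = a * (b - ratr q2) + (a - ratr q1) * ratr q2 by ring.
rewrite e; apply: (abs_lt_add hC); rewrite (absM hC).
  apply: (@le_lt_trans _ _ ((abs a + 1) * abs (b - ratr q2))).
    by apply: ler_wpM2r; [apply: (abs_ge0 hC) | rewrite lerDl].
  rewrite -ltr_pdivlMl // mulrC; apply: lt_le_trans h2 _; by rewrite ge_min lexx orbT.
have hq2 : abs (ratr q2 : L) <= abs b + 1.
  have e3 : (ratr q2 : L) = b + - (b - ratr q2) by rewrite opprB addrC subrK.
  rewrite e3; apply: le_trans (abs_ultra hC _ _) _; rewrite ge_max (absN hC) lerDl ler01 /=.
  have h2' : abs (b - ratr q2) <= 1 by apply: ltW; apply: lt_le_trans h2 _; rewrite ge_min lexx.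
  by apply: le_trans h2' _; rewrite lerDr (abs_ge0 hC).
apply: (@le_lt_trans _ _ (abs (a - ratr q1) * (abs b + 1))).
  by apply: ler_wpM2l => //; apply: (abs_ge0 hC).
by rewrite -ltr_pdivlMr.
Qed.

Lemma ratr0L (L : closedFieldType) : ratr 0 = 0 :> L.
Proof. exact: (ratr_int L 0). Qed.
Lemma ratr1L (L : closedFieldType) : ratr 1 = 1 :> L.
Proof. exact: (ratr_int L 1). Qed.

Lemma Qp_sum p (R : realType) (L : closedFieldType) (abs : L -> R) (hC : is_Cp p abs)
  (pp : prime p) n (F : 'I_n -> L) : (forall i, in_Qp abs (F i)) -> in_Qp abs (\sum_(i < n) F i).
Proof.
move=> h; apply: (big_ind (in_Qp abs)) => //.
  by have := Qp_rat hC 0; rewrite ratr0L.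
by move=> x y; apply: (Qp_add hC pp).
Qed.

Lemma Qp_lim p (R : realType) (L : closedFieldType) (abs : L -> R) (hC : is_Cp p abs)
  (u : nat -> L) l : (forall n, in_Qp abs (u n)) -> cvgL abs u l -> in_Qp abs l.
Proof.
move=> hu hl eps e0; have [N hN] := hl eps e0; have [q hq] := hu N eps e0.
exists q; have e : l - ratr q = (u N - ratr q) + - (u N - l) by ring.
rewrite e; apply: (abs_lt_add hC) => //; rewrite (absN hC); exact: hN.
Qed.

Lemma Qp_pprod p (R : realType) (L : closedFieldType) (abs : L -> R) (hC : is_Cp p abs)
  (pp : prime p) (G : nat -> nat -> L) : (forall n, (1 <= n)%N -> in_H abs (G n)) ->
  forall N i, in_Qp abs (pprod G N i).
Proof.
move=> GH; elim=> [|N IH] i /=.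
  rewrite /ps_one; case: (i == 0%N).
    by have := Qp_rat hC 1; rewrite ratr1L.
  by have := Qp_rat hC 0; rewrite ratr0L.
rewrite /ps_mul; apply: (Qp_sum hC pp) => j; apply: (Qp_mul hC pp) => //.
by apply: (GH N.+1 (ltn0Sn N)).1.
Qed.

Lemma cvgL_bound_ev p (R : realType) (L : closedFieldType) (abs : L -> R) (hC : is_Cp p abs)
  (u : nat -> L) l B N0 : cvgL abs u l -> 0 <= B -> (forall n, (N0 <= n)%N -> abs (u n) <= B) ->
  abs l <= B.
Proof.
move=> hu B0 hb.
have hu' : cvgL abs (fun n => u (n + N0)%N) l.
  move=> eps e0; have [N hN] := hu eps e0; exists N => n hn; apply: hN.
  by apply: leq_trans hn _; apply: leq_addr.
by apply: (cvgL_bound hC hu' B0) => n; apply: hb; apply: leq_addl.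
Qed.

Lemma small_bound (R : realType) (E0 a eps : R) : 0 <= E0 -> 0 <= a -> a < 1 -> 0 < eps ->
  exists n, forall m, (n <= m)%N -> E0 * a ^+ m < eps.
Proof.
move=> E0p a0 a1 e0.
have E1 : 0 < E0 + 1 by apply: ltr_wpDl E0p ltr01.
have [n hn] := pow_small a0 a1 (divr_gt0 e0 E1).
exists n => m hm; apply: (@le_lt_trans _ _ ((E0 + 1) * a ^+ m)).
  by apply: ler_wpM2r; [apply: exprn_ge0 | rewrite lerDl].
by rewrite mulrC -ltr_pdivlMr // hn.
Qed.

Lemma coef_cauchy p (R : realType) (L : closedFieldType) (abs : L -> R) (hC : is_Cp p abs)
  (G : nat -> nat -> L) (r E0 a : R) (k : nat) : 0 < r -> 0 <= E0 -> 0 <= a -> a < 1 ->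
  (forall N d, (k <= N)%N -> gle abs (ps_sub (pprod G (N + d)) (pprod G N)) r (E0 * a ^+ (N - k))) ->
  forall i, exists l, cvgL abs (fun N => pprod G N i) l.
Proof.
move=> r0 E0p a0 a1 hD i; apply: (abs_complete hC) => eps e0.
have ri : 0 < r ^+ i by apply: exprn_gt0.
have [n hn] := small_bound E0p a0 a1 (mulr_gt0 e0 ri).
exists (k + n)%N => m m' hm hm'.
wlog hmm : m m' hm hm' / (m <= m')%N.
  move=> H; case: (leqP m m') => h; first by apply: H.
  by rewrite (absB hC); apply: H => //; apply: ltnW.
have km : (k <= m)%N by apply: leq_trans hm; apply: leq_addr.
have := hD m (m' - m)%N km i; rewrite subnKC // /ps_sub (absB hC) => h.
rewrite -(ltr_pM2r ri); apply: le_lt_trans h _; apply: hn.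
by rewrite leq_subRL // addnC.
Qed.

Lemma Ginf_est p (R : realType) (L : closedFieldType) (abs : L -> R) (hC : is_Cp p abs)
  (G : nat -> nat -> L) (Ginf : nat -> L) (r E0 a : R) (k : nat) : 0 < r -> 0 <= E0 -> 0 <= a ->
  (forall N d, (k <= N)%N -> gle abs (ps_sub (pprod G (N + d)) (pprod G N)) r (E0 * a ^+ (N - k))) ->
  (forall i, cvgL abs (fun N => pprod G N i) (Ginf i)) ->
  forall N, (k <= N)%N -> gle abs (ps_sub (pprod G N) Ginf) r (E0 * a ^+ (N - k)).
Proof.
move=> r0 E0p a0 hD hl N kN i.
have ri : 0 < r ^+ i by apply: exprn_gt0.
rewrite -ler_pdivlMr //.
have hv := cvgL_sub hC (cvgL_cst hC (pprod G N i)) (hl i).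
apply: (cvgL_bound_ev hC (N0 := N) hv); first by apply: divr_ge0; [apply: mulr_ge0; [|apply: exprn_ge0] | apply: ltW].
move=> M hM; rewrite ler_pdivlMr // (absB hC).
by have := hD N (M - N)%N kN i; rewrite subnKC.
Qed.

Theorem mainTheorem4 (p : nat) (R : realType) (L : closedFieldType) (abs : L -> R)
  (p_prime : prime p) (p_odd : odd p) (hCp : is_Cp p abs)
  (lam mu : R) (lam_gt0 : 0 < lam) (mu_ge0 : 0 <= mu)
  (G : nat -> nat -> L)
  (GH : forall n, (1 <= n)%N -> in_H abs (G n))
  (Gtype : type_lm p abs G lam mu) :
  exists Ginf : nat -> L,
    in_H abs Ginf /\
    (forall rho : R, 0 < rho < 1 ->
       forall eps : R, 0 < eps -> exists N0, forall N, (N0 <= N)%N ->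
         (normrho abs (ps_sub (pprod G N) Ginf) rho <= eps%:E)%E) /\
    (ps_order p abs Ginf <= mu%:E)%E.
Proof.
have hC := hCp.
case: Gtype => hG1 [nu hG2].
set P := (p%:R : R).
have P1 : 1 < P by rewrite /P ltr1n prime_gt1.
have P0 : 0 < P by apply: lt_trans P1; exact: ltr01.
set A := P `^ mu. set a := P `^ (- lam).
have A1 : 1 <= A by rewrite /A -(powRr0 P); apply: ler_powR => //; exact: ltW.
have A0 : 0 <= A by apply: le_trans A1; exact: ler01.
have a0 : 0 <= a by apply: powR_ge0.
have a1 : a < 1.
  rewrite lt_neqAle; apply/andP; split.
    rewrite /a powR_eq1 negb_or gt_eqF //= negb_or ltNge (ltW P0) /= oppr_eq0.
    by rewrite gt_eqF.
  by rewrite /a -(powRr0 P); apply: ler_powR; [exact: ltW| rewrite oppr_le0 ltW].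
have [c hc] : exists c : nat, nu <= lam * c%:R.
  exists (Num.Def.archi_bound `|nu / lam|); rewrite -ler_pdivrMl // mulrC.
  apply: le_trans (real_ler_norm _) (ltW (archi_boundP _)) => //; exact: num_real.
have PN0 : 0 <= P `^ nu by apply: powR_ge0.
have hrad : forall w : L, 0 < abs w -> abs w < 1 -> exists k, is_n0 p (abs w) k /\
    (forall N, gle abs (pprod G N) (abs w) (A ^+ (k + c))) /\
    (forall N d, (k <= N)%N -> gle abs (ps_sub (pprod G (N + d)) (pprod G N)) (abs w)
       (A ^+ (k + c) * P `^ nu * a ^+ (N - k))).
  move=> w w0 w1; have wr : 0 < abs w < 1 by rewrite w0 w1.
  have [k hk] := is_n0_exists p_prime wr.
  exists k; split => //.
  exact: (radius_main hC p_prime lam_gt0 mu_ge0 GH hG1 hG2 hc w0 w1 hk).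
have [w0 [hw0 [_ hw1]]] := radius_exists hC p_prime (lexx (0:R)) (@ltr01 R).
have [k0 [hk0 [_ hD0]]] := hrad w0 hw0 hw1.
have E0p : 0 <= A ^+ (k0 + c) * P `^ nu by apply: mulr_ge0 => //; apply: exprn_ge0.
have hex := coef_cauchy hC hw0 E0p a0 a1 hD0.
have [Ginf hlim] := choice hex.
exists Ginf.
have hrad2 : forall w : L, 0 < abs w -> abs w < 1 -> exists k, is_n0 p (abs w) k /\
    (forall N, (k <= N)%N -> gle abs (ps_sub (pprod G N) Ginf) (abs w)
       (A ^+ (k + c) * P `^ nu * a ^+ (N - k))) /\
    gle abs Ginf (abs w) (A ^+ (k + c) * Num.max 1 (P `^ nu)).
  move=> w wp w1; have [k [hk [hB hD]]] := hrad w wp w1.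
  have Ep : 0 <= A ^+ (k + c) * P `^ nu by apply: mulr_ge0 => //; apply: exprn_ge0.
  have hGE := Ginf_est hC wp Ep a0 hD hlim.
  exists k; split => //; split => //.
  apply: (gle_mono (A := Num.max (A ^+ (k + c)) (A ^+ (k + c) * P `^ nu * a ^+ (k - k)))).
    rewrite subnn expr0 mulr1 maxr_pMr; first by rewrite mulr1.
    exact: exprn_ge0.
  apply: (gle_ext (f := ps_sub (pprod G k) (ps_sub (pprod G k) Ginf))).
    by move=> i; rewrite /ps_sub opprB addrC subrK.
  exact: (gle_sub hC (ltW wp) (hB k) (hGE k (leqnn k))).
split; [split|split].
- move=> i; apply: (Qp_lim hC _ (hlim i)) => N; exact: (Qp_pprod hC p_prime GH).
- move=> z hz.
  have [w [wp [zw w1]]] := radius_exists hC p_prime (abs_ge0 hC z) hz.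
  have [k [_ [_ hGb]]] := hrad2 w wp w1.
  set Bn := A ^+ (k + c) * Num.max 1 (P `^ nu).
  have Bn0 : 0 <= Bn by apply: mulr_ge0; [apply: exprn_ge0| rewrite le_max ler01].
  set r := abs w. set y := abs z / r.
  have rn0 : r != 0 by rewrite gt_eqF.
  have y0 : 0 <= y by apply: divr_ge0; [apply: (abs_ge0 hC)|apply: ltW].
  have y1 : y < 1 by rewrite /y ltr_pdivrMr // mul1r.
  apply: (sums_of_terms hC) => eps e0.
  have [K hK] := small_bound Bn0 y0 y1 e0.
  exists K => i hi; rewrite (absM hC) (absX hC).
  have e : abs z ^+ i = r ^+ i * y ^+ i by rewrite -exprMn /y mulrC divfK.
  rewrite e mulrA; apply: le_lt_trans (ler_wpM2r (exprn_ge0 i y0) (hGb i)) (hK i hi).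
- move=> rho /andP [r0 r1] eps e0.
  have [w [wp [rw w1]]] := radius_exists hC p_prime (ltW r0) r1.
  have [k [_ [hGE _]]] := hrad2 w wp w1.
  have E0' : 0 <= A ^+ (k + c) * P `^ nu by apply: mulr_ge0 => //; apply: exprn_ge0.
  have [n hn] := small_bound E0' a0 a1 e0.
  exists (k + n)%N => N hN.
  have kN : (k <= N)%N by apply: leq_trans hN; apply: leq_addr.
  have B0 : 0 <= A ^+ (k + c) * P `^ nu * a ^+ (N - k) by apply: mulr_ge0 => //; apply: exprn_ge0.
  apply: le_trans (normrho_le hC B0 (hGE N kN) (ltW rw)) _.
  by rewrite lee_fin; apply: ltW; apply: hn; rewrite leq_subRL // addnC.
set rho := P^-1.
have rho0' : 0 < rho by rewrite invr_gt0.
have rho1 : rho < 1 by rewrite /rho invf_lt1.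
have rr : 0 < rho < 1 by rewrite rho0' rho1.
have [kr hkr] := is_n0_exists p_prime rr.
set M1 := Num.max 1 (P `^ nu).
have M10 : 0 <= M1 by rewrite le_max ler01.
apply: ereal_inf_lbound; exists mu; split => //.
exists rho; split => //.
apply: (@le_lt_trans _ _ ((A ^+ (kr + c) * M1)%:E)); last exact: ltry.
apply: ge_ereal_sup => x [m ->].
have pm0 : (0 < p ^ m)%N by rewrite expn_gt0 prime_gt0.
have [wm hwm] := root_exists (p%:R : L) pm0.
have hwmn : abs wm ^+ (p ^ m) = rho by rewrite -(absX hC) hwm (abs_p hC p_prime).
have wmp : 0 < abs wm.
  rewrite lt_def (abs_ge0 hC) andbT; apply/eqP => e; move: hwmn; rewrite e expr0n.
  by rewrite eqn0Ngt pm0 /= => h; move: rho0'; rewrite -h ltxx.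
have wm1 : abs wm < 1 by rewrite -(expr_lt1 pm0 (abs_ge0 hC wm)) hwmn.
have erho : rho `^ ((p ^ m)%:R)^-1 = abs wm.
  rewrite -hwmn -powR_mulrn ?(abs_ge0 hC) // -powRrM mulfV ?powRr1 ?(abs_ge0 hC) //.
  by rewrite pnatr_eq0 -lt0n.
rewrite erho.
have [km [hkm [_ hGb]]] := hrad2 wm wmp wm1.
have kmle : (km <= kr + m)%N.
  rewrite leqNgt; apply/negP => h; have := hkm.2 _ h.
  rewrite expnD mulnC exprM hwmn ltNge; by case: hkr => ->.
have Bm0 : 0 <= A ^+ (km + c) * M1 by apply: mulr_ge0 => //; apply: exprn_ge0.
have hnorm := normrho_le hC Bm0 hGb (lexx _).
apply: le_trans (lee_wpmul2l _ hnorm) _; first by rewrite lee_fin powR_ge0.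
rewrite -EFinM lee_fin.
have hA : P `^ (- (m%:R * mu)) * A ^+ m = 1.
  rewrite /A -powR_mulrn ?powR_ge0 // -powRrM powRN (mulrC mu) mulVf //.
  by rewrite gt_eqF // powR_gt0.
apply: (@le_trans _ _ (P `^ (- (m%:R * mu)) * (A ^+ m * A ^+ (kr + c) * M1))).
  apply: ler_wpM2l; first exact: powR_ge0.
  apply: ler_wpM2r => //; rewrite -exprD; apply: ler_weXn2l => //.
  by rewrite addnCA addnA leq_add2r.
by rewrite !mulrA hA mul1r.
Qed.
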